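(* Let $f:\mathbb{R}\to\mathbb{R}\cup\{\pm\infty\}$ be a proper concave function such that $f(\delta)\le0$ and $\partial f(\delta)\cap\mathbb{R}_{<0}\ne\emptyset$ for some $\delta\in\operatorname{dom}(f)$, and such that $f$ has a root or attains its maximum; let $\delta^*:=\max(\{\delta:f(\delta)=0\}\cup\operatorname{argmax}f)$. Run the (standard) Newton–Dinkelbach method described in the context. Then for every iteration $i\ge2$: $\delta^*\le\delta^{(i)}<\delta^{(i-1)}$, $f(\delta^* )\ge f(\delta^{(i)})>f(\delta^{(i-1)})$, and $g^{(i)}\ge g^{(i-1)}$, where the last inequality holds with equality if and only if $g^{(i)}=\inf_{g\in\partial f(\delta^{(i)})}g$, $g^{(i-1)}=\sup_{g\in\partial f(\delta^{(i-1)})}g$ and $f(\delta^{(i)})=0$. Moreover, \[ \frac{f(\delta^{(i)})}{f(\delta^{(i-1)})}+\frac{g^{(i)}}{g^{(i-1)}}\le1. \]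
   Context: $\operatorname{dom}(f):=\{x:-\infty<f(x)<\infty\}$; $\partial f(x_0):=\{g: f(x)\le f(x_0)+g(x-x_0)\ \forall x\in\mathbb{R}\}$. Newton–Dinkelbach method: given oracles returning $f(\delta)$ and some $g\in\partial f(\delta)$, input $\delta^{(1)}\in\operatorname{dom}(f)$, $g^{(1)}\in\partial f(\delta^{(1)})$ with $f(\delta^{(1)})\le0$, $g^{(1)}<0$. At iteration $i\ge1$: if $f(\delta^{(i)})=0$ return $\delta^{(i)}$; otherwise let $\delta:=\delta^{(i)}-f(\delta^{(i)})/g^{(i)}$ and $g\in\partial f(\delta)$ from the oracle; if $f(\delta)=-\infty$, or $f(\delta)<0$ and $g\ge0$, stop and report no root; otherwise set $\delta^{(i+1)}:=\delta$, $g^{(i+1)}:=g$. ''Iteration $i$'' refers to an iteration at whose start $\delta^{(i)},g^{(i)}$ are defined. *)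

(* Defs.v *)
From HB Require Import structures.
From mathcomp Require Import all_boot all_order all_algebra.
From mathcomp Require Import boolp classical_sets reals constructive_ereal ereal.
Set Implicit Arguments. Unset Strict Implicit. Unset Printing Implicit Defensive.
Import Order.TTheory GRing.Theory Num.Theory.
Local Open Scope classical_set_scope.
Local Open Scope ring_scope.

Section Defs.
Variable R : realType.

Definition edom (f : R -> \bar R) : set R := [set x | f x \is a fin_num].

Definition eproper (f : R -> \bar R) : Prop :=
  (forall x, f x <> +oo%E) /\ (exists x, f x \is a fin_num).

(* concave (hypograph convex); for a function never +oo this is the
   usual concavity inequality between points of the domain *)
Definition econcave (f : R -> \bar R) : Prop :=
  forall x y t, x \in edom f -> y \in edom f -> 0 <= t <= 1 ->
    (((t * fine (f x) + (1 - t) * fine (f y))%R)%:E <= f (t * x + (1 - t) * y)%R)%E.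

(* superdifferential: {g | f x <= f x0 + g (x - x0) for all x} *)
Definition esubdiff (f : R -> \bar R) (x0 : R) : set R :=
  [set g | forall x, (f x <= f x0 + ((g * (x - x0))%R)%:E)%E].

Definition eargmax (f : R -> \bar R) : set R :=
  [set x | forall y, (f y <= f x)%E].

Definition rootargmax (f : R -> \bar R) : set R :=
  [set x | f x = 0%E] `|` eargmax f.

Definition ND_init (f : R -> \bar R) (delta g : nat -> R) : Prop :=
  delta 1%N \in edom f /\ g 1%N \in esubdiff f (delta 1%N) /\
  (f (delta 1%N) <= 0)%E /\ g 1%N < 0.

(* ND_run f delta g n : the Newton--Dinkelbach method, run from
   (delta 1, g 1) with oracle answers g (j+1) in the superdifferential at
   delta (j+1), reaches iteration n, i.e. delta^(1..n), g^(1..n) are all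
   defined: for every j in [1, n), iteration j neither returned nor stopped. *)
Definition ND_run (f : R -> \bar R) (delta g : nat -> R) (n : nat) : Prop :=
  ND_init f delta g /\
  forall j : nat, (1 <= j)%N -> (j < n)%N ->
    [/\ f (delta j) <> 0%E,
        delta j.+1 = delta j - fine (f (delta j)) / g j,
        g j.+1 \in esubdiff f (delta j.+1),
        f (delta j.+1) <> -oo%E &
        ~ ((f (delta j.+1) < 0)%E /\ 0 <= g j.+1)].

End Defs.

(* Main.v *)
Require Import Defs.
From HB Require Import structures.
From mathcomp Require Import all_boot all_order all_algebra.
From mathcomp Require Import boolp classical_sets reals constructive_ereal ereal.
From mathcomp Require Import ring lra.
Import Order.TTheory GRing.Theory Num.Theory.
Local Open Scope classical_set_scope.
Local Open Scope ring_scope.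

Lemma sgR (R : realType) (f : R -> \bar R) x0 F s y :
  s \in esubdiff f x0 -> f x0 = F%:E -> (f y <= (F + s * (y - x0))%:E)%E.
Proof. by move=> /set_mem /(_ y); rewrite /= => + E; rewrite E EFinD. Qed.

Lemma sgRR (R : realType) (f : R -> \bar R) x0 F s y G :
  s \in esubdiff f x0 -> f x0 = F%:E -> f y = G%:E -> G <= F + s * (y - x0).
Proof. by move=> hs E1 E2; have := @sgR _ f x0 F s y hs E1; rewrite E2 lee_fin. Qed.

Lemma sg_mono (R : realType) (f : R -> \bar R) a b Fa Fb s t :
  a < b -> f a = Fa%:E -> f b = Fb%:E -> s \in esubdiff f a ->
  t \in esubdiff f b -> t <= s.
Proof.
move=> ab ea eb hs ht.
have h1 := @sgRR _ f _ _ _ _ _ hs ea eb; have h2 := @sgRR _ f _ _ _ _ _ ht eb ea.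
rewrite leNgt; apply/negP => ts.
have : 0 < (t - s) * (b - a) by apply: mulr_gt0; rewrite subr_gt0.
lra.
Qed.

Lemma fin_eq (R : realType) (f : R -> \bar R) x : x \in edom f -> f x = (fine (f x))%:E.
Proof. by move=> /set_mem /= h; rewrite fineK. Qed.

Lemma ND_inv (R : realType) (f : R -> \bar R) delta g n :
  ND_run f delta g n -> forall j, (1 <= j)%N -> (j <= n)%N ->
  [/\ delta j \in edom f, g j \in esubdiff f (delta j), (f (delta j) <= 0)%E &
      (f (delta j) <> 0%E -> g j < 0)].
Proof.
move=> [[d1 [g1 [f1 gl1]]] run].
elim=> [//|j IH] _ hjn.
case: j IH hjn => [|j] IH hjn; first by split => //.
have [dj gj fj gjn] := IH isT (ltnW hjn).
have [fne deq gsub fninf nstop] := run j.+1 isT hjn.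
have E := @fin_eq _ f _ dj.
set F := fine (f (delta j.+1)) in E.
have F0 : F < 0 by rewrite lt_neqAle; apply/andP; split;
  [apply/eqP => h; apply: fne; rewrite E h | by rewrite -lee_fin -E].
have G0 := gjn fne.
have le0 : (f (delta j.+2) <= 0)%E.
  have := @sgR _ f _ F (g j.+1) (delta j.+2) gj E.
  have -> : F + g j.+1 * (delta j.+2 - delta j.+1) = 0.
    by rewrite deq /F; field; rewrite lt_eqF.
  by [].
split => //.
- apply/mem_set; rewrite /edom /= fin_numE; apply/andP; split; apply/eqP => //.
  by move=> h; move: le0; rewrite h.
- move=> h; rewrite ltNge; apply/negP => hg; apply: nstop; split => //.
  by rewrite lt_neqAle le0 andbT; apply/eqP.
Qed.

Theorem lemma3p1 (R : realType) (f : R -> \bar R)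
  (hproper : eproper f) (hconc : econcave f)
  (hstart : exists d, [/\ d \in edom f, (f d <= 0)%E &
                          exists2 s, s \in esubdiff f d & s < 0])
  (hroot : (exists x, f x = 0%E) \/ (exists x, x \in eargmax f))
  (dstar : R) (hdstar_in : dstar \in rootargmax f)
  (hdstar_max : forall x, x \in rootargmax f -> x <= dstar)
  (delta g : nat -> R) (n : nat) (hrun : ND_run f delta g n) :
  forall i : nat, (2 <= i)%N -> (i <= n)%N ->
    [/\ dstar <= delta i /\ delta i < delta i.-1,
        (f (delta i) <= f dstar)%E /\ (f (delta i.-1) < f (delta i))%E,
        g i.-1 <= g i,
        (g i = g i.-1 <->
           [/\ ereal_inf [set (s%:E)%E | s in esubdiff f (delta i)] = ((g i)%:E)%E,
               ereal_sup [set (s%:E)%E | s in esubdiff f (delta i.-1)] = ((g i.-1)%:E)%E &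
               f (delta i) = 0%E]) &
        fine (f (delta i)) / fine (f (delta i.-1)) + g i / g i.-1 <= 1].
Proof.
case=> [|[|j]] // _ hin /=.
have [_ run] := hrun.
have [da gaS fa0 gan] := @ND_inv _ f delta g n hrun j.+2 isT hin.
have [db gbS fb0 gbn] := @ND_inv _ f delta g n hrun j.+1 isT (ltnW hin).
have [fbne deq _ _ _] := run j.+1 isT hin.
have gbneg := gbn fbne.
have Ea := @fin_eq _ f _ da. have Eb := @fin_eq _ f _ db.
move: deq gaS gbS Ea Eb fa0 fb0 gan fbne gbneg da db.
set a := delta j.+2; set b := delta j.+1; set ga := g j.+2; set gb := g j.+1.
set Fa := fine (f a); set Fb := fine (f b).
move=> deq gaS gbS Ea Eb fa0 fb0 gan fbne gbneg da db.
have Fb0 : Fb < 0 by rewrite lt_neqAle; apply/andP; split;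
  [apply/eqP => h; apply: fbne; rewrite Eb h | by rewrite -lee_fin -Eb].
have Fa0 : Fa <= 0 by rewrite -lee_fin -Ea.
have gbn0 : gb != 0 by rewrite lt_eqF.
have hba : b - a = Fb / gb by rewrite deq; field.
have key : gb * (b - a) = Fb by rewrite hba; field.
have hpos : 0 < b - a.
  rewrite hba; have : gb^-1 < 0 by rewrite invr_lt0.
  by move=> h; nra.
have ab : a < b by lra.
have h1 := @sgRR _ f _ _ _ _ _ gbS Eb Ea.
have h2 := @sgRR _ f _ _ _ _ _ gaS Ea Eb.
have mono : gb <= ga := @sg_mono _ f _ _ _ _ _ _ ab Ea Eb gaS gbS.
have ganeg : Fa != 0 -> ga < 0.
  move=> /eqP h; apply: gan => h'; apply: h; rewrite /Fa h'.  by [].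
split.
- split; last by [].
  rewrite leNgt; apply/negP => hlt.
  have fd := @sgR _ f _ _ _ dstar gbS Eb.
  have neg : Fb + gb * (dstar - b) < 0 by nra.
  case: (set_mem hdstar_in) => [root | amax].
    by move: fd; rewrite root lee_fin; lra.
  have := amax a; rewrite Ea => hfa.
  have := le_trans hfa fd; rewrite lee_fin => hh.
  have [Faz|Fanz] := eqVneq Fa 0; first by lra.
  have gan' := ganeg Fanz.
  have fd2 := @sgR _ f _ _ _ dstar gaS Ea.
  have := le_trans hfa fd2; rewrite lee_fin => hh2.
  nra.
- split.
    case: (set_mem hdstar_in) => [root | amax]; last exact: amax.
    by rewrite root Ea lee_fin.
  rewrite Ea Eb lte_fin.
  have [Faz|Fanz] := eqVneq Fa 0; first by lra.
  have gan' := ganeg Fanz. nra.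
- exact: mono.
- split.
    move=> heq.
    have Faz : Fa = 0 by nra.
    split.
    + apply/eqP; rewrite eq_le; apply/andP; split.
        by apply: ereal_inf_lbound; exists ga => //; exact: set_mem.
      apply: le_ereal_inf_tmp => _ [s hs <-]; rewrite lee_fin heq.
      exact: (@sg_mono _ f _ _ _ _ _ _ ab Ea Eb (mem_set hs) gbS).
    + apply/eqP; rewrite eq_le; apply/andP; split; last first.
        by apply: ereal_sup_ubound; exists gb => //; exact: set_mem.
      apply: ge_ereal_sup => _ [s hs <-]; rewrite lee_fin -heq.
      exact: (@sg_mono _ f _ _ _ _ _ _ ab Ea Eb gaS (mem_set hs)).
    + by rewrite Ea Faz.
  move=> [hinf _ hfa].
  have gbin : esubdiff f a gb.
    move=> y /=; rewrite hfa add0e.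
    have := @sgR _ f _ _ _ y gbS Eb.
    have -> : Fb + gb * (y - b) = gb * (y - a) by rewrite -key; ring.
    by [].
  have : (ereal_inf [set (s%:E)%E | s in esubdiff f a] <= gb%:E)%E.
    by apply: ereal_inf_lbound; exists gb.
  rewrite hinf lee_fin => hle.
  by apply/eqP; rewrite eq_le hle mono.
- have -> : Fa / Fb + ga / gb = (Fa + ga * (b - a)) / Fb.
    by rewrite hba; field; rewrite gbn0 lt_eqF.
  by rewrite ler_ndivrMr // mul1r.
Qed.
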